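(* Let $E$ be a nonempty closed convex subset of a real Hilbert space $H$. Let $f:E\times E\to\mathbb{R}$ be a bifunction satisfying conditions (A1)–(A4) below, and let $S:E\to E$ be a hybrid mapping with $F(S)\cap EP(f)\neq\emptyset$. Let $\{\alpha_n\}$ satisfy $0<\alpha\le\alpha_n\le 1$ for all $n$ (for some constant $\alpha>0$), let $\{r_n\}\subset(0,\infty)$ satisfy $\liminf_{n\to\infty}r_n>0$, and let $\{\beta_n\}$ be a sequence in $[b,1]$ for some $b\in(0,1)$ with $\liminf_{n\to\infty}\beta_n(1-\beta_n)>0$. Let $\{x_n\}$ and $\{u_n\}$ be generated by $x_1=x\in E$ and, for all $n\in\mathbb{N}$, $$u_n\in E \text{ such that } f(u_n,y)+\frac{1}{r_n}\langle y-u_n,u_n-x_n\rangle\ge 0\quad\text{for all } y\in E,$$ $$y_n=(1-\beta_n)x_n+\beta_n Su_n,\qquad x_{n+1}=(1-\alpha_n)x_n+\alpha_n Sy_n.$$ Then $\{x_n\}$ converges weakly to a point $v\in F(S)\cap EP(f)$, where $v=\lim_{n\to\infty}P_{F(S)\cap EP(f)}(x_n)$.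
   Context: $F(S)=\{x\in E: Sx=x\}$. A mapping $S:E\to E$ is hybrid if $3\|Sx-Sy\|^2\le \|x-y\|^2+\|Sx-y\|^2+\|Sy-x\|^2$ for all $x,y\in E$. $EP(f)=\{x\in E: f(x,y)\ge 0 \text{ for all } y\in E\}$. Conditions: (A1) $f(x,x)=0$ for all $x\in E$; (A2) $f(x,y)+f(y,x)\le 0$ for all $x,y\in E$; (A3) for all $x,y,z\in E$, $\lim_{t\downarrow 0} f(tz+(1-t)x,y)\le f(x,y)$; (A4) for each $x\in E$, $y\mapsto f(x,y)$ is convex and lower semicontinuous. $P_K$ is the metric projection of $H$ onto a nonempty closed convex set $K$; the limit defining $v$ is in norm. *)

(* Defs.v *)
From HB Require Import structures.
From mathcomp Require Import all_boot all_order all_algebra.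
From mathcomp Require Import all_classical all_reals all_analysis.
Set Implicit Arguments. Unset Strict Implicit. Unset Printing Implicit Defensive.
Import Order.TTheory GRing.Theory Num.Theory.
Import numFieldNormedType.Exports.
Local Open Scope classical_set_scope.
Local Open Scope ring_scope.

Section Defs.
Variables (R : realType) (V : normedModType R).

Definition is_inner_product (ip : V -> V -> R) : Prop :=
  [/\ (forall x y, ip x y = ip y x),
      (forall (a : R) x y z, ip (a *: x + y) z = a * ip x z + ip y z)
    & (forall x, ip x x = `|x| ^+ 2)].

Definition convex_subset (E : set V) : Prop :=
  forall x y (t : R), E x -> E y -> 0 <= t <= 1 -> E (t *: x + (1 - t) *: y).

Definition Fixpts (E : set V) (S : V -> V) : set V := [set x | E x /\ S x = x].

Definition EPset (E : set V) (f : V -> V -> R) : set V :=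
  [set x | E x /\ forall y, E y -> 0 <= f x y].

Definition hybrid (E : set V) (S : V -> V) : Prop :=
  forall x y, E x -> E y ->
    3 * `|S x - S y| ^+ 2 <= `|x - y| ^+ 2 + `|S x - y| ^+ 2 + `|S y - x| ^+ 2.

Definition A1 (E : set V) (f : V -> V -> R) := forall x, E x -> f x x = 0.
Definition A2 (E : set V) (f : V -> V -> R) :=
  forall x y, E x -> E y -> f x y + f y x <= 0.
(* lim_{t -> 0+} f(tz + (1-t)x, y) <= f(x,y), read as limsup *)
Definition A3 (E : set V) (f : V -> V -> R) :=
  forall x y z, E x -> E y -> E z ->
    forall eps : R, 0 < eps ->
      \forall t \near 0^'+, f (t *: z + (1 - t) *: x) y <= f x y + eps.
Definition A4 (E : set V) (f : V -> V -> R) :=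
  forall x, E x ->
    (forall y1 y2 (t : R), E y1 -> E y2 -> 0 <= t <= 1 ->
       f x (t *: y1 + (1 - t) *: y2) <= t * f x y1 + (1 - t) * f x y2) /\
    (forall y, E y -> forall eps : R, 0 < eps ->
       \forall z \near y, E z -> f x y - eps < f x z).

(* metric projection onto K: a nearest point of K (unique when K is a
   nonempty closed convex subset of a Hilbert space) *)
Definition metric_proj (K : set V) (z : V) : V :=
  xget 0 [set p | K p /\ forall k, K k -> `|z - p| <= `|z - k|].

Definition weak_cvg (ip : V -> V -> R) (x : nat -> V) (v : V) : Prop :=
  forall w, (fun n => ip (x n) w) @ \oo --> ip v w.

End Defs.

(* Main.v *)
Require Import Defs.
From HB Require Import structures.
From mathcomp Require Import all_boot all_order all_algebra.
From mathcomp Require Import all_classical all_reals all_analysis.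
From mathcomp Require Import ring lra.
Import Order.TTheory GRing.Theory Num.Theory.
Import numFieldNormedType.Exports.
Local Open Scope classical_set_scope.
Local Open Scope ring_scope.
Set Implicit Arguments. Unset Strict Implicit.


Section IP.
Variables (R : realType) (H : normedModType R) (ip : H -> H -> R).
Hypothesis hip : is_inner_product ip.

Lemma ipC x y : ip x y = ip y x.
Proof. by case: hip. Qed.
Lemma ipAl (c : R) x y z : ip (c *: x + y) z = c * ip x z + ip y z.
Proof. by case: hip. Qed.
Lemma ipxx x : ip x x = `|x| ^+ 2.
Proof. by case: hip. Qed.

Lemma ipDl x y z : ip (x + y) z = ip x z + ip y z.
Proof. by rewrite -[x in LHS]scale1r ipAl mul1r. Qed.
Lemma ip0l z : ip 0 z = 0.
Proof. by have := ipDl 0 0 z; rewrite addr0 => /eqP; rewrite -subr_eq subrr eq_sym => /eqP. Qed.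
Lemma ipZl (c : R) x z : ip (c *: x) z = c * ip x z.
Proof. by rewrite -[c *: x]addr0 ipAl ip0l addr0. Qed.
Lemma ipNl x z : ip (- x) z = - ip x z.
Proof. by rewrite -scaleN1r ipZl mulN1r. Qed.
Lemma ipBl x y z : ip (x - y) z = ip x z - ip y z.
Proof. by rewrite ipDl ipNl. Qed.
Lemma ipDr x y z : ip z (x + y) = ip z x + ip z y.
Proof. by rewrite ipC ipDl ![ip _ z]ipC. Qed.
Lemma ipZr (c : R) x z : ip z (c *: x) = c * ip z x.
Proof. by rewrite ipC ipZl ipC. Qed.
Lemma ipNr x z : ip z (- x) = - ip z x.
Proof. by rewrite ipC ipNl ipC. Qed.
Lemma ipBr x y z : ip z (x - y) = ip z x - ip z y.
Proof. by rewrite ipDr ipNr. Qed.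
Lemma ip0r z : ip z 0 = 0.
Proof. by rewrite ipC ip0l. Qed.

Lemma normD2 (x y : H) : `|x + y| ^+ 2 = `|x| ^+ 2 + 2 * ip x y + `|y| ^+ 2.
Proof. by rewrite -!ipxx ipDl !ipDr (ipC y x); ring. Qed.
Lemma normB2 (x y : H) : `|x - y| ^+ 2 = `|x| ^+ 2 - 2 * ip x y + `|y| ^+ 2.
Proof. by rewrite normD2 ipNr normrN; ring. Qed.

Lemma norm_comb (t : R) (x y : H) :
  `|t *: x + (1 - t) *: y| ^+ 2 =
  t * `|x| ^+ 2 + (1 - t) * `|y| ^+ 2 - t * (1 - t) * `|x - y| ^+ 2.
Proof.
rewrite (normD2 (t *: x)) normB2 ipZl ipZr !normrZ !exprMn (real_normK (num_real t)) (real_normK (num_real (1 - t))).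
ring.
Qed.

Lemma ip_le_half (x y : H) : 2 * ip x y <= `|x| ^+ 2 + `|y| ^+ 2.
Proof.
have := sqr_ge0 `|x - y|; rewrite normB2; lra.
Qed.

Lemma CS (x y : H) : ip x y <= `|x| * `|y|.
Proof.
have [->|x0] := eqVneq x 0; first by rewrite ip0l normr0 mul0r.
have [->|y0] := eqVneq y 0; first by rewrite ip0r normr0 mulr0.
have nx : 0 < `|x| by rewrite normr_gt0.
have ny : 0 < `|y| by rewrite normr_gt0.
have := ip_le_half (`|y| *: x) (`|x| *: y).
rewrite ipZl ipZr !normrZ !normr_id => h.
have h2 : `|x| * `|y| * (ip x y) <= `|x| * `|y| * (`|x| * `|y|) by nra.
by rewrite -(ler_pM2l (mulr_gt0 nx ny)).
Qed.

Lemma CSabs (x y : H) : `|ip x y| <= `|x| * `|y|.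
Proof.
rewrite ler_norml CS andbT.
have := CS (- x) y; rewrite ipNl normrN; lra.
Qed.

End IP.


Lemma near_oo (P : nat -> Prop) :
  (\forall n \near \oo, P n) <-> exists N, forall n, (N <= n)%N -> P n.
Proof.
split => [[N _ hN]|[N hN]]; first by exists N.
by exists N.
Qed.

Lemma small_inv (R : realType) (d : R) : 0 < d ->
  exists N, forall n, (N <= n)%N -> (n.+1%:R : R)^-1 < d.
Proof.
move=> d0; exists (Num.truncn d^-1) => n hn.
rewrite invf_plt ?posrE //.
apply: lt_le_trans (truncnS_gt _) _.
by rewrite ler_nat ltnS.
Qed.

Lemma sqr_lt_pos (R : realType) (a e : R) : 0 <= a -> 0 < e -> a ^+ 2 < e ^+ 2 -> a < e.
Proof. move=> a0 e0 h; rewrite ltNge; apply/negP => h2; nra. Qed.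

Section Norm.
Variables (R : realType) (H : normedModType R).

Lemma cvg_distP (s : nat -> H) (l : H) :
  s @ \oo --> l <-> forall e, 0 < e -> exists N, forall n, (N <= n)%N -> `|l - s n| < e.
Proof.
split => [hs e e0|hs].
  by apply/near_oo; apply: cvgr_dist_lt.
apply/cvgrPdist_lt => e e0; apply/near_oo; exact: hs.
Qed.

Lemma comb_sub (t : R) (z x y : H) :
  z - (t *: x + (1 - t) *: y) = t *: (z - x) + (1 - t) *: (z - y).
Proof.
rewrite !scalerBr addrACA -scalerDl (addrC t) subrK scale1r opprD.
by [].
Qed.

Lemma comb_same (t : R) (x y : H) :
  (t *: x + (1 - t) *: y) - y = t *: (x - y).
Proof. by rewrite scalerBl scale1r scalerBr addrA addrAC addrK. Qed.

End Norm.

Section Complete.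
Variables (R : realType) (H : completeNormedModType R).

Lemma cauchy_seq_cvg (s : nat -> H) :
  (forall e, 0 < e -> exists N, forall n, (N <= n)%N -> `|s N - s n| < e) ->
  exists l : H, s @ \oo --> l.
Proof.
move=> hc.
have : cvg (s @ \oo).
  apply: cauchy_cvg; apply: cauchy_exP => e e0.
  have [N hN] := hc e e0.
  exists (s N); exists N => // n /= Nn.
  by rewrite -ball_normE /=; apply: hN.
by move=> hl; exists (lim (s @ \oo)).
Qed.

End Complete.

Lemma arith1 (R : realType) (A B M d i j q : R) : A < d + i -> B < d + j -> d <= M ->
  i < q -> j < q -> 2 * A + 2 * B - 4 * M < 4 * q.
Proof. lra. Qed.

Lemma arith2 (R : realType) (P Kn Zn Dn d i g : R) : g = P - Kn -> Dn < g / 2 ->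
  i < g * g / 4 -> Zn ^+ 2 < d + i -> d <= Kn ^+ 2 -> P <= Zn + Dn ->
  0 <= Kn -> 0 <= Zn -> 0 < g -> False.
Proof.
move=> -> h1 h2 h3 h4 h5 h6 h7 h8.
have h9 : Kn + (P - Kn) / 2 <= Zn by lra.
have h10 : (Kn + (P - Kn) / 2) ^+ 2 <= Zn ^+ 2.
  rewrite ler_pXn2r // ?nnegrE //; lra.
nra.
Qed.

Lemma arith3 (R : realType) (N g M t : R) : 0 < g -> 0 <= M -> 0 < t -> t * M < g ->
  N <= N - 2 * (t * g) + t ^+ 2 * M -> False.
Proof. move=> h1 h2 h3 h4 h5. have : t * (t * M) < t * g by rewrite ltr_pM2l. nra. Qed.

Section Proj.
Variables (R : realType) (H : completeNormedModType R) (ip : H -> H -> R).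
Hypothesis hip : is_inner_product ip.

Lemma midpoint_ineq (z k1 k2 : H) :
  `|k1 - k2| ^+ 2 = 2 * `|z - k1| ^+ 2 + 2 * `|z - k2| ^+ 2
     - 4 * `|z - ((1/2) *: k1 + (1 - 1/2) *: k2)| ^+ 2.
Proof.
have -> : z - ((1/2) *: k1 + (1 - 1/2) *: k2) =
   (1/2) *: (z - k1) + (1 - 1/2) *: (z - k2).
  exact: comb_sub.
rewrite (norm_comb hip).
have -> : z - k1 - (z - k2) = - (k1 - k2) by rewrite (opprB z k2) (addrC (z - k1)) addrA subrK opprB.
by rewrite normrN; field.
Qed.

Lemma proj_exists (K : set H) (z : H) : closed K -> convex_subset K ->
  (exists k, K k) -> exists p, K p /\ forall k, K k -> `|z - p| <= `|z - k|.
Proof.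
move=> Kc Kcv [k0 Kk0].
set D := [set `|z - k| ^+ 2 | k in K].
have hD : has_inf D.
  split; first by exists (`|z - k0| ^+ 2), k0.
  by exists 0 => y [k _ <-]; rewrite sqr_ge0.
set d := inf D.
have dle k : K k -> d <= `|z - k| ^+ 2.
  by move=> Kk; apply: (ge_inf hD.2); exists k.
have : forall n : nat, exists k, K k /\ `|z - k| ^+ 2 < d + (n.+1%:R)^-1.
  move=> n; have hn : 0 < (n.+1%:R : R)^-1 by rewrite invr_gt0 ltr0Sn.
  have [e [k Kk <-] he] := inf_adherent hn hD.
  by exists k.
move=> /choice [ks hks].
have cauchy : forall e : R, 0 < e -> exists N, forall n, (N <= n)%N -> `|ks N - ks n| < e.
  move=> e e0.
  have q0 : 0 < e * e / 4 by apply: divr_gt0; [exact: mulr_gt0|lra].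
  have [N hN] := small_inv q0.
  exists N => n Nn.
  apply: sqr_lt_pos => //.
  rewrite (midpoint_ineq z).
  have m1 := dle _ (Kcv _ _ (1/2) (hks N).1 (hks n).1 (ltac:(apply/andP; split; lra))).
  have h1 := (hks N).2; have h2 := (hks n).2.
  have e1 := hN N (leqnn N); have e2 := hN n Nn.
  have p1 : 0 < (N.+1%:R : R)^-1 by rewrite invr_gt0 ltr0Sn.
  have p2 : 0 < (n.+1%:R : R)^-1 by rewrite invr_gt0 ltr0Sn.
  have -> : e ^+ 2 = 4 * (e * e / 4) by rewrite expr2; field.
  exact: arith1 h1 h2 m1 e1 e2.
have [p hp] := cauchy_seq_cvg cauchy.
exists p; split.
  by apply: (closed_cvg _ Kc _ _ hp); apply/near_oo; exists 0%N => n _; apply: (hks n).1.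
move=> k Kk; rewrite leNgt; apply/negP => hlt.
set g := `|z - p| - `|z - k|.
have g0 : 0 < g by rewrite /g subr_gt0.
have [N1 hN1] := (cvg_distP ks p).1 hp (g / 2) (ltac:(lra)).
have q0 : 0 < g * g / 4 by apply: divr_gt0; [exact: mulr_gt0|lra].
have [N2 hN2] := small_inv q0.
set n := maxn N1 N2.
have h1 := hN1 n (leq_maxl _ _); have h2 := hN2 n (leq_maxr _ _).
have h3 := (hks n).2; have h4 := dle _ Kk.
have tri : `|z - p| <= `|z - ks n| + `|p - ks n|.
  have -> : z - p = (z - ks n) - (p - ks n) by rewrite opprB addrA subrK.
  exact: ler_normB.
exact: (arith2 (erefl g) h1 h2 h3 h4 tri (normr_ge0 (z - k)) (normr_ge0 (z - ks n)) g0).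
Qed.

Lemma metric_projP (K : set H) (z : H) : closed K -> convex_subset K ->
  (exists k, K k) ->
  K (metric_proj K z) /\ forall k, K k -> `|z - metric_proj K z| <= `|z - k|.
Proof.
move=> Kc Kcv Kn; rewrite /metric_proj.
exact: (@xgetPex _ 0 [set p | K p /\ forall k, K k -> `|z - p| <= `|z - k|]
  (proj_exists z Kc Kcv Kn)).
Qed.

Lemma proj_char (K : set H) (z p : H) : convex_subset K -> K p ->
  (forall k, K k -> `|z - p| <= `|z - k|) ->
  forall c, K c -> ip (z - p) (c - p) <= 0.
Proof.
move=> Kcv Kp hp c Kc; rewrite leNgt; apply/negP => g0.
set g := ip (z - p) (c - p) in g0.
set M := `|c - p| ^+ 2.
have M0 : 0 <= M by rewrite sqr_ge0.
set t := g / (M + g).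
have t0 : 0 < t by rewrite /t; apply: divr_gt0 => //; lra.
have t1 : t <= 1 by rewrite /t ler_pdivrMr; lra.
have tM : t * M < g.
  rewrite /t mulrAC ltr_pdivrMr; last by lra.
  nra.
have Kct := Kcv _ _ t Kc Kp (ltac:(apply/andP; split; lra)).
have := hp _ Kct.
have -> : z - (t *: c + (1 - t) *: p) = (z - p) - t *: (c - p).
  by rewrite -(comb_same t c p) opprB addrA subrK.
move=> h; have : `|z - p| ^+ 2 <= `|z - p - t *: (c - p)| ^+ 2.
  by rewrite ler_pXn2r // ?nnegrE.
rewrite (normB2 hip (z - p) (t *: (c - p))) (ipZr hip) normrZ exprMn (real_normK (num_real t)) -/g -/M.
exact: arith3.
Qed.

End Proj.


Lemma arith4 (R : realType) (gy gw c L e d : R) : 0 <= L -> c < gy -> gw <= c ->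
  gy <= gw + L * d -> d < e -> e = (gy - c) / (L + 1) -> False.
Proof.
move=> L0 h1 h2 h3 h4 he.
have : (L + 1) * e = gy - c by rewrite he mulrC divfK //; lra.
nra.
Qed.

Section Closed.
Variables (R : realType) (H : normedModType R).

Lemma closed_lip (g : H -> R) (L c : R) : 0 <= L ->
  (forall x y, g x <= g y + L * `|x - y|) -> closed [set y | g y <= c].
Proof.
move=> L0 hg y cly /=; rewrite leNgt; apply/negP => hc.
set e := (g y - c) / (L + 1).
have e0 : 0 < e by apply: divr_gt0; lra.
have [w [/= Aw bw]] := cly _ (nbhsx_ballx y _ e0).
move: bw; rewrite -ball_normE /= => bw.
exact: (arith4 L0 hc Aw (hg y w) bw).
Qed.

Lemma closed_lipE (E : set H) (g : H -> R) (c : R) : closed E ->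
  (forall y, E y -> forall eps, 0 < eps -> \forall z \near y, E z -> g y - eps < g z) ->
  closed [set y | E y /\ g y <= c].
Proof.
move=> Ec hg y cly.
have Ey : E y.
  apply: Ec => B /cly [w [[Ew _] Bw]]; by exists w.
split => //; rewrite leNgt; apply/negP => hc.
have e0 : 0 < g y - c by lra.
have [w [[Ew gw] /= hw]] := cly _ (hg y Ey _ e0).
have := hw Ew; lra.
Qed.

End Closed.

Lemma arith5 (R : realType) (d an aN S q : R) : d <= 2 * (an - aN) -> an <= S ->
  S - q < aN -> d < 2 * q.
Proof. lra. Qed.

Section Cluster.
Variables (R : realType) (H : completeNormedModType R) (ip : H -> H -> R).
Hypothesis hip : is_inner_product ip.

Lemma cluster_pt (s : nat -> H) (Q : nat -> Prop) (M : R) :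
  (forall n, `|s n| <= M) -> (forall m, exists n, (m <= n)%N /\ Q n) ->
  exists z, forall D : set H, closed D -> convex_subset D ->
    (exists m, forall n, (m <= n)%N -> Q n -> D (s n)) -> D z.
Proof.
move=> sM Qinf.
pose K m := [set y : H | forall D : set H, closed D -> convex_subset D ->
    (forall n, (m <= n)%N -> Q n -> D (s n)) -> D y].
have Ks m n : (m <= n)%N -> Q n -> K m (s n).
  by move=> mn Qn D _ _ hD; apply: hD.
have Kne m : exists y, K m y.
  by have [n [mn Qn]] := Qinf m; exists (s n); apply: Ks.
have Kcl m : closed (K m).
  move=> y cly D Dc Dcv hD.
  have sub : K m `<=` D by move=> w Kw; exact: (Kw D Dc Dcv hD).
  apply: Dc; exact: (closureS sub cly).
have Kcv m : convex_subset (K m).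
  move=> x y t Kx Ky t01 D Dc Dcv hD.
  exact: Dcv (Kx D Dc Dcv hD) (Ky D Dc Dcv hD) t01.
have Kmono m m' : (m <= m')%N -> K m' `<=` K m.
  move=> mm' y Ky D Dc Dcv hD; apply: Ky => // n m'n Qn.
  by apply: hD => //; apply: leq_trans m'n.
pose p m := metric_proj (K m) 0.
have pP m := metric_projP hip (0 : H) (Kcl m) (Kcv m) (Kne m).
pose a m := `|p m| ^+ 2.
have aM m : a m <= M ^+ 2.
  have [n [mn Qn]] := Qinf m.
  have := (pP m).2 _ (Ks _ _ mn Qn); rewrite !sub0r !normrN => h.
  rewrite /a ler_pXn2r ?nnegrE //; last exact: (le_trans (normr_ge0 _) (sM n)).
  exact: le_trans h (sM n).
have amono m m' : (m <= m')%N -> a m <= a m'.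
  move=> mm'; have := (pP m).2 _ (Kmono _ _ mm' _ (pP m').1).
  rewrite !sub0r !normrN => h; rewrite /a ler_pXn2r ?nnegrE //.
have pdist m m' : (m <= m')%N -> `|p m - p m'| ^+ 2 <= 2 * (a m' - a m).
  move=> mm'.
  rewrite (midpoint_ineq hip 0) !sub0r !normrN.
  have Kmid := Kcv m _ _ (1/2) (pP m).1 (Kmono _ _ mm' _ (pP m').1)
     (ltac:(apply/andP; split; lra)).
  have := (pP m).2 _ Kmid; rewrite !sub0r !normrN => h.
  have h2 : `|p m| ^+ 2 <= `|(1 / 2) *: p m + (1 - 1 / 2) *: p m'| ^+ 2.
    by rewrite ler_pXn2r ?nnegrE.
  rewrite /a; lra.
set A := [set a m | m in [set: nat]].
have hA : has_sup A.
  split; first by exists (a 0%N), 0%N.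
  by exists (M ^+ 2) => y [m _ <-]; apply: aM.
have cauchy : forall e : R, 0 < e -> exists N, forall n, (N <= n)%N -> `|p N - p n| < e.
  move=> e e0.
  have q0 : 0 < e * e / 2 by apply: divr_gt0; [exact: mulr_gt0|lra].
  have [y [N _ <-] hN] := sup_adherent q0 hA.
  exists N => n Nn; apply: sqr_lt_pos => //.
  have h1 := pdist _ _ Nn.
  have h2 : a n <= sup A by apply: sup_upper_bound => //; exists n.
  move: hN; set q := e * e / 2 => hN.
  have -> : e ^+ 2 = 2 * q by rewrite /q expr2; field.
  exact: arith5 h1 h2 hN.
have [z hz] := cauchy_seq_cvg cauchy.
exists z => D Dc Dcv [m hm].
have Kmz : K m z.
  apply: (closed_cvg _ (Kcl m) _ _ hz); apply/near_oo; exists m => n mn.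
  exact: Kmono _ _ mn _ (pP n).1.
exact: Kmz.
Qed.

End Cluster.


Ltac ipexp hip := rewrite -?(ipxx hip) ?(ipBl hip) ?(ipBr hip) ?(ipDl hip)
  ?(ipDr hip) ?(ipZl hip) ?(ipZr hip) ?(ipNl hip) ?(ipNr hip).

Section Gen.
Variables (R : realType) (H : normedModType R) (ip : H -> H -> R).
Hypothesis hip : is_inner_product ip.

Lemma comb_dist2 (t : R) (a b p : H) :
  `|(1 - t) *: a + t *: b - p| ^+ 2 =
  (1 - t) * `|a - p| ^+ 2 + t * `|b - p| ^+ 2 - t * (1 - t) * `|a - b| ^+ 2.
Proof.
ipexp hip.
rewrite (ipC hip b a) (ipC hip p a) (ipC hip p b).
ring.
Qed.

Lemma conv2 (E : set H) (a b : H) (t : R) : convex_subset E -> E a -> E b ->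
  0 <= t <= 1 -> E ((1 - t) *: a + t *: b).
Proof.
move=> Ecv Ea Eb /andP [t0 t1].
set s := 1 - t.
have -> : t = 1 - s by rewrite /s; ring.
apply: Ecv => //; apply/andP; rewrite /s; split; lra.
Qed.

Lemma halfspace_closed (z d : H) (c : R) : closed [set y | ip (y - z) d <= c].
Proof.
apply: (@closed_lip _ _ (fun y => ip (y - z) d) `|d|) => // x y.
have -> : ip (x - z) d = ip (y - z) d + ip (x - y) d.
  by ipexp hip; ring.
rewrite lerD2l mulrC; exact: CS.
Qed.

Lemma halfspace_convex (z d : H) (c : R) : convex_subset [set y | ip (y - z) d <= c].
Proof.
move=> x y t /= hx hy /andP [t0 t1].
have -> : ip (t *: x + (1 - t) *: y - z) d = t * ip (x - z) d + (1 - t) * ip (y - z) d.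
  by ipexp hip; ring.
nra.
Qed.

Lemma id1 (x u p : H) :
  `|x - p| ^+ 2 = `|u - p| ^+ 2 + `|u - x| ^+ 2 + 2 * ip (p - u) (u - x).
Proof.
ipexp hip.
rewrite (ipC hip u x) (ipC hip p x) (ipC hip p u).
ring.
Qed.

Lemma id2 (x q q' : H) :
  `|x - q'| ^+ 2 = `|x - q| ^+ 2 + `|q - q'| ^+ 2 - 2 * ip (x - q) (q' - q).
Proof.
ipexp hip.
rewrite (ipC hip q x) (ipC hip q' x) (ipC hip q' q).
ring.
Qed.

Lemma demi_ineq (u z s v : H) :
  3 * `|s - v| ^+ 2 <= `|u - z| ^+ 2 + `|s - z| ^+ 2 + `|v - u| ^+ 2 ->
  2 * ip (u - z) (z - v) + `|z - v| ^+ 2 <=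
  ip (s - u) (u - z) - 3 * ip (s - u) (u - v) - `|s - u| ^+ 2.
Proof.
ipexp hip.
rewrite (ipC hip z u) (ipC hip s u) (ipC hip v u) (ipC hip s z) (ipC hip v z) (ipC hip v s).
lra.
Qed.

Lemma demi_bound (u z s v : H) :
  ip (s - u) (u - z) - 3 * ip (s - u) (u - v) - `|s - u| ^+ 2 <=
  `|s - u| * (`|u - z| + 3 * `|u - v|).
Proof.
have h1 := CS hip (s - u) (u - z).
have h2 := CSabs hip (s - u) (u - v).
have h3 := sqr_ge0 `|s - u|.
rewrite ler_norml in h2; case/andP: h2 => h2 _.
nra.
Qed.

Lemma id3 (u x q w z : H) :
  ip (u - w) (z - w) = ip (u - x) (z - w) + ip (x - q) (z - q) + ip (x - q) (q - w)
    + ip (q - w) (z - w).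
Proof. ipexp hip; ring. Qed.

End Gen.

Lemma arith6 (R : realType) (A B : R) : 0 <= A -> 0 <= B ->
  3 * A ^+ 2 <= B ^+ 2 + A ^+ 2 + B ^+ 2 -> A <= B.
Proof. move=> A0 B0 h; rewrite -(ler_pXn2r (n:=2)) ?nnegrE //; lra. Qed.

Lemma arith7 (R : realType) (t fzy fzx fxy e : R) : 0 < t -> t < 1 ->
  0 <= t * fzy + (1 - t) * fzx -> fzx <= 0 -> fzy <= fxy + e -> fxy < 0 ->
  e = - fxy / 2 -> False.
Proof.
move=> t0 t1 h1 h2 h3 h4 he.
have : 0 <= t * fzy by nra.
rewrite pmulr_rge0 // => h5.
have : fxy + e < 0 by rewrite he; lra.
lra.
Qed.

Section EFS.
Variables (R : realType) (H : normedModType R) (ip : H -> H -> R).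
Variables (E : set H) (f : H -> H -> R) (S : H -> H).
Hypothesis hip : is_inner_product ip.
Hypothesis Ec : closed E.
Hypothesis Ecv : convex_subset E.
Hypotheses (hA1 : A1 E f) (hA2 : A2 E f) (hA3 : A3 E f) (hA4 : A4 E f).
Hypothesis SE : forall z, E z -> E (S z).
Hypothesis hyb : hybrid E S.

Lemma quasi_ne (p x : H) : Fixpts E S p -> E x -> `|S x - p| <= `|x - p|.
Proof.
move=> [Ep Sp] Ex.
have := hyb Ex Ep; rewrite Sp (distrC p x).
by apply: arith6.
Qed.

Lemma fix_closed : closed (Fixpts E S).
Proof.
move=> y cly.
have Ey : E y.
  by apply: Ec => B /cly [w [[Ew _] Bw]]; exists w.
split => //; apply/eqP; rewrite -subr_eq0 -normr_le0.
apply/ler_addgt0Pr => e e0; rewrite add0r.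
have e20 : 0 < e / 2 by lra.
have [w [Fw /= bw]] := cly _ (nbhsx_ballx y _ e20).
move: bw; rewrite -ball_normE /= => bw.
have h := quasi_ne Fw Ey.
have -> : S y - y = (S y - w) - (y - w) by rewrite opprB addrA subrK.
apply: (le_trans (ler_normB _ _)).
lra.
Qed.

Lemma fix_convex : convex_subset (Fixpts E S).
Proof.
move=> p q t [Ep Sp] [Eq Sq] t01.
have Er := Ecv Ep Eq t01.
split => //.
set r := t *: p + (1 - t) *: q in Er *.
have h1 := quasi_ne (conj Ep Sp) Er.
have h2 := quasi_ne (conj Eq Sq) Er.
have key : `|S r - r| ^+ 2 <= 0.
  have e1 : S r - r = t *: (S r - p) + (1 - t) *: (S r - q).
    by rewrite /r comb_sub.
  rewrite e1 (norm_comb hip).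
  have e2 : r - r = t *: (r - p) + (1 - t) *: (r - q).
    by rewrite {1}/r comb_sub.
  have : `|r - r| ^+ 2 = 0 by rewrite subrr normr0 expr0n.
  rewrite {1}e2 (norm_comb hip).
  have -> : S r - p - (S r - q) = q - p by rewrite opprB addrC addrA subrK.
  have -> : r - p - (r - q) = q - p by rewrite opprB addrC addrA subrK.
  move: t01 => /andP [t0 t1].
  have h1' : `|S r - p| ^+ 2 <= `|r - p| ^+ 2 by rewrite ler_pXn2r ?nnegrE.
  have h2' : `|S r - q| ^+ 2 <= `|r - q| ^+ 2 by rewrite ler_pXn2r ?nnegrE.
  nra.
apply/eqP; rewrite -subr_eq0 -normr_le0.
rewrite -(ler_pXn2r (n:=2)) ?nnegrE // expr0n /=; exact: key.
Qed.

Lemma EP_le (p y : H) : EPset E f p -> E y -> f y p <= 0.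
Proof.
move=> [Ep hp] Ey; have := hA2 Ey Ep; have := hp _ Ey; lra.
Qed.

Lemma minty (x : H) : E x -> (forall y, E y -> f y x <= 0) -> EPset E f x.
Proof.
move=> Ex hx; split => // y Ey.
rewrite leNgt; apply/negP => fneg.
set e := - f x y / 2.
have e0 : 0 < e by rewrite /e; lra.
have : \forall t \near 0^'+, (0 < t /\ t < 1) /\
     f (t *: y + (1 - t) *: x) y <= f x y + e.
  near=> t; split; first split.
  - by near: t; exact: nbhs_right_gt.
  - by near: t; apply: nbhs_right_lt; lra.
  - by near: t; exact: hA3.
case/filter_ex => t [[t0 t1] ht].
set z := t *: y + (1 - t) *: x in ht.
have Ez : E z by apply: Ecv => //; apply/andP; split; lra.
have := (hA4 Ez).1 _ _ t Ey Ex (ltac:(apply/andP; split; lra)).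
rewrite -/z hA1 // => h.
exact: (arith7 t0 t1 h (hx _ Ez) ht fneg).
Unshelve. all: by end_near.
Qed.

Lemma sublevel_closed (w : H) (c : R) : E w -> closed [set t | E t /\ f w t <= c].
Proof. by move=> Ew; apply: closed_lipE => //; apply: (hA4 Ew).2. Qed.

Lemma sublevel_convex (w : H) (c : R) : E w -> convex_subset [set t | E t /\ f w t <= c].
Proof.
move=> Ew a b t [Ea fa] [Eb fb] t01; split; first exact: Ecv.
apply: le_trans ((hA4 Ew).1 _ _ _ Ea Eb t01) _.
move: t01 => /andP [t0 t1]; nra.
Qed.

Lemma EP_closed : closed (EPset E f).
Proof.
move=> y cly.
have Ey : E y by apply: Ec => B /cly [w [[Ew _] Bw]]; exists w.
apply: minty => // w Ew.
have sub : EPset E f `<=` [set t | E t /\ f w t <= 0].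
  by move=> t Pt; split; [exact: Pt.1|exact: EP_le].
exact: (@sublevel_closed w 0 Ew _ (closureS sub cly)).2.
Qed.

Lemma EP_convex : convex_subset (EPset E f).
Proof.
move=> a b t Pa Pb t01.
have Ez := Ecv Pa.1 Pb.1 t01.
apply: minty => // w Ew.
have := @sublevel_convex w 0 Ew _ _ _ (conj Pa.1 (EP_le Pa Ew)) (conj Pb.1 (EP_le Pb Ew)) t01.
by case.
Qed.

Lemma C_closed : closed (Fixpts E S `&` EPset E f).
Proof. exact: closedI fix_closed EP_closed. Qed.

Lemma C_convex : convex_subset (Fixpts E S `&` EPset E f).
Proof.
move=> a b t [Fa Pa] [Fb Pb] t01; split; [exact: fix_convex|exact: EP_convex].
Qed.

End EFS.


Lemma liminf_pos (R : realType) (s : nat -> R) :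
  (0 < limn_einf (fun n => (s n)%:E))%E ->
  exists c, 0 < c /\ exists N, forall n, (N <= n)%N -> c <= s n.
Proof.
rewrite limn_einf_lim.
rewrite (cvg_lim _ (@cvg_einfs_sup R (fun n => (s n)%:E))) //.
move=> /ereal_sup_gt [_ [N _ <-]] h.
have lb n : (N <= n)%N -> (einfs (fun n => (s n)%:E) N <= (s n)%:E)%E.
  by move=> Nn; apply: ereal_inf_lbound; exists n.
move: h lb; case: (einfs _ N) => [r| |] //.
- move=> r0 lb; exists r; split; first by rewrite -lte_fin.
  by exists N => n /lb; rewrite lee_fin.
- move=> _ lb; exists 1; split => //.
  by exists N => n /lb.
Qed.

Definition ev (P : nat -> Prop) := exists N, forall n, (N <= n)%N -> P n.

Lemma evI (P Q : nat -> Prop) : ev P -> ev Q -> ev (fun n => P n /\ Q n).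
Proof.
move=> [N1 h1] [N2 h2]; exists (maxn N1 N2) => n hn; split.
- by apply: h1; apply: leq_trans hn; apply: leq_maxl.
- by apply: h2; apply: leq_trans hn; apply: leq_maxr.
Qed.

Lemma ev_mono (P Q : nat -> Prop) : ev P -> (forall n, P n -> Q n) -> ev Q.
Proof. by move=> [N h] hPQ; exists N => n /h /hPQ. Qed.

Lemma ev_all (P : nat -> Prop) : (forall n, P n) -> ev P.
Proof. by move=> h; exists 0%N. Qed.

Lemma noninc_le (R : realType) (D : nat -> R) : (forall n, D n.+1 <= D n) ->
  forall n m, (n <= m)%N -> D m <= D n.
Proof.
move=> hD n m /subnKC <-; elim: (m - n)%N => [|k IH]; first by rewrite addn0.
by rewrite addnS; apply: le_trans (hD _) IH.
Qed.

Lemma noninc_diff (R : realType) (D : nat -> R) : (forall n, 0 <= D n) ->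
  (forall n, D n.+1 <= D n) -> forall e, 0 < e ->
  exists N, forall n m, (N <= n)%N -> (n <= m)%N -> D n - D m < e.
Proof.
move=> D0 hD e e0.
set A := [set D n | n in [set: nat]].
have hA : has_inf A by split; [exists (D 0%N), 0%N|exists 0 => y [n _ <-]].
have [_ [N _ <-] hN] := inf_adherent e0 hA.
exists N => n m Nn nm.
have h1 := noninc_le hD Nn.
have h2 : inf A <= D m by apply: (ge_inf hA.2); exists m.
lra.
Qed.


Lemma arith8 (R : realType) (al be X X1 Y1 Y W U T V Z : R) :
  0 <= al <= 1 -> 0 <= be <= 1 ->
  X1 = (1 - al) * X + al * Y1 - al * (1 - al) * Z -> Y1 <= Y ->
  Y = (1 - be) * X + be * W - be * (1 - be) * V -> W <= U -> U <= X - T ->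
  0 <= Z ->
  X1 <= X - al * be * (T + (1 - be) * V).
Proof.
move=> /andP [a0 a1] /andP [b0 b1] -> h1 hY h2 h3 Z0; rewrite hY in h1.
have e1 : al * (1 - al) * Z >= 0 by apply: mulr_ge0 => //; apply: mulr_ge0; lra.
have e2 : al * Y1 <= al * ((1 - be) * X + be * W - be * (1 - be) * V) by apply: ler_wpM2l.
have e3 : be * W <= be * (X - T) by apply: ler_wpM2l => //; lra.
have e4 : al * (be * W) <= al * (be * (X - T)) by apply: ler_wpM2l.
nra.
Qed.

Lemma arith9 (R : realType) (a b al be X V D0 D1 q : R) : 0 < a -> 0 < b ->
  a <= al -> b <= be -> be <= 1 -> 0 <= X -> 0 <= V ->
  D1 <= D0 - al * be * (X + (1 - be) * V) -> D0 - D1 < a * b * q -> X < q.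
Proof.
move=> a0 b0 h1 h2 h3 X0 V0 h4 h5.
have e1 : a * b <= al * be by apply: ler_pM => //; lra.
have e2 : 0 <= (1 - be) * V by apply: mulr_ge0 => //; lra.
have e3 : a * b * X <= al * be * X by apply: ler_wpM2r.
have e4 : 0 <= al * be * ((1 - be) * V) by apply: mulr_ge0 => //; apply: mulr_ge0; lra.
have e5 : a * b * X < a * b * q by nra.
by move: e5; rewrite ltr_pM2l // mulr_gt0.
Qed.

Lemma arith10 (R : realType) (a c al be X V D0 D1 q : R) : 0 < a -> 0 < c ->
  a <= al -> 0 <= be -> be <= 1 -> c <= be * (1 - be) -> 0 <= X -> 0 <= V ->
  D1 <= D0 - al * be * (X + (1 - be) * V) -> D0 - D1 < a * c * q -> V < q.
Proof.
move=> a0 c0 h1 h2 h3 hc X0 V0 h4 h5.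
have e1 : a * c <= al * (be * (1 - be)) by apply: ler_pM => //; lra.
have e3 : a * c * V <= al * (be * (1 - be)) * V by apply: ler_wpM2r.
have e4 : 0 <= al * be * X by apply: mulr_ge0 => //; apply: mulr_ge0; lra.
have e5 : a * c * V < a * c * q by nra.
by move: e5; rewrite ltr_pM2l // mulr_gt0.
Qed.

Lemma arith11 (R : realType) (A B e : R) : A < e / 2 -> B < e / 2 -> B + A < e.
Proof. lra. Qed.

Lemma arith12 (R : realType) (A X Z M : R) : A <= X - Z -> 0 <= Z -> X <= M -> A <= M.
Proof. lra. Qed.

Lemma arith13 (R : realType) (A B Q I G : R) : A = B + Q - 2 * I -> I <= 0 -> A <= G ->
  Q <= G - B.
Proof. lra. Qed.

Lemma le0_small (R : realType) (X : R) : (forall e, 0 < e -> X <= e) -> X <= 0.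
Proof.
move=> h; rewrite leNgt; apply/negP => X0.
have := h (X / 2) (ltac:(lra)); lra.
Qed.

Lemma le_small (R : realType) (X : R) : (forall e, 0 < e -> X <= e) -> X <= 0.
Proof. exact: le0_small. Qed.

Lemma arithK (R : realType) (a b c : R) : 0 <= a -> 0 <= b -> 0 <= c -> 0 <= 4 * a + b + 3 * c.
Proof. lra. Qed.

Lemma lt_divP (R : realType) (X Y Z : R) : 0 < Z -> X < Y / Z -> X * Z < Y.
Proof. by move=> Z0; rewrite ltr_pdivlMr. Qed.

Lemma arith14 (R : realType) (I D2 Rhs ns A K eps : R) :
  2 * I + D2 <= Rhs -> Rhs <= ns * A -> A <= K -> ns * (K + 1) < eps ->
  0 <= ns -> 0 <= A -> I <= (eps - D2) / 2.
Proof.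
move=> h1 h2 h3 h4 n0 A0.
have : ns * A <= ns * (K + 1) by apply: ler_wpM2l => //; lra.
lra.
Qed.

Lemma arith15 (R : realType) (fuy fyu ri I X Y B rho eps : R) :
  0 < ri -> ri * rho <= 1 -> 0 <= fuy + ri * I -> fuy + fyu <= 0 ->
  I <= Y * X -> Y <= B -> 0 <= X -> 0 <= Y -> X * (B + 1) < eps * rho -> 0 < rho ->
  0 < eps -> fyu <= eps.
Proof.
move=> ri0 hri h1 h2 h3 h4 X0 Y0 h5 rho0 e0.
have e1 : Y * X <= (B + 1) * X by apply: ler_wpM2r => //; lra.
have e2 : ri * I <= ri * ((B + 1) * X) by apply: ler_wpM2l; lra.
have e3 : ri * ((B + 1) * X) <= ri * (eps * rho) by apply: ler_wpM2l; [lra|rewrite mulrC; lra].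
have e4 : ri * (eps * rho) <= eps by rewrite mulrCA; apply: ler_piMr => //; lra.
lra.
Qed.

Lemma arith16 (R : realType) (I1 I2 I3 I4 X Z g Q G eps : R) :
  I1 <= X * Z -> I2 <= 0 -> I3 <= g * Q -> I4 <= Q * Z -> g <= G ->
  Q * (G + Z + 1) < eps / 3 -> X * (Z + 1) < eps / 3 ->
  0 <= X -> 0 <= Z -> 0 <= Q -> 0 <= g -> I1 + I2 + I3 + I4 <= eps.
Proof.
move=> h1 h2 h3 h4 h5 h6 h7 X0 Z0 Q0 g0.
have e1 : X * Z <= X * (Z + 1) by apply: ler_wpM2l => //; lra.
have e2 : g * Q <= G * Q by apply: ler_wpM2r.
have e3 : 0 <= X * (Z + 1) by apply: mulr_ge0 => //; lra.
lra.
Qed.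

Lemma arith17 (R : realType) (J K X Hn c : R) : c <= J -> - (X * Hn) <= K ->
  X * (Hn + 1) < c / 2 -> 0 <= X -> 0 <= Hn -> - J - K <= - (c / 2).
Proof.
move=> h1 h2 h3 X0 H0.
have e1 : X * Hn <= X * (Hn + 1) by apply: ler_wpM2l => //; lra.
lra.
Qed.

Section Main.
Variables (R : realType) (H : completeNormedModType R) (ip : H -> H -> R).
Variables (E : set H) (f : H -> H -> R) (S : H -> H).
Variables (alpha r beta : nat -> R) (a b : R) (x0 : H) (x u : nat -> H).
Hypothesis hip : is_inner_product ip.
Hypothesis Ec : closed E.
Hypothesis Ecv : convex_subset E.
Hypotheses (hA1 : A1 E f) (hA2 : A2 E f) (hA3 : A3 E f) (hA4 : A4 E f).
Hypothesis SE : forall z, E z -> E (S z).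
Hypothesis hyb : hybrid E S.
Hypothesis Cne : exists z, Fixpts E S z /\ EPset E f z.
Hypothesis a0 : 0 < a.
Hypothesis halpha : forall n, a <= alpha n <= 1.
Hypothesis hr : forall n, 0 < r n.
Hypothesis hrinf : (0 < limn_einf (fun n => (r n)%:E))%E.
Hypothesis hb : 0 < b < 1.
Hypothesis hbeta : forall n, b <= beta n <= 1.
Hypothesis hbinf : (0 < limn_einf (fun n => (beta n * (1 - beta n))%:E))%E.
Hypothesis Ex0 : E x0.
Hypothesis hx0 : x 0%N = x0.
Hypothesis hu : forall n, E (u n) /\
     forall y, E y -> 0 <= f (u n) y + (r n)^-1 * ip (y - u n) (u n - x n).
Hypothesis hx : forall n, x n.+1 = (1 - alpha n) *: x n +
     alpha n *: S ((1 - beta n) *: x n + beta n *: S (u n)).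

Let C := Fixpts E S `&` EPset E f.
Let yy n := (1 - beta n) *: x n + beta n *: S (u n).

Lemma alpha01 n : 0 <= alpha n <= 1.
Proof.
have := halpha n; case/andP => h1 h2; apply/andP; split => //.
exact: le_trans (ltW a0) h1.
Qed.
Lemma beta01 n : 0 <= beta n <= 1.
Proof.
have := hbeta n; case/andP: hb => hb0 hb1; case/andP => h1 h2; apply/andP; split => //.
exact: le_trans (ltW hb0) h1.
Qed.

Lemma Exy n : E (x n) /\ E (yy n).
Proof.
have Ey m : E (x m) -> E (yy m).
  move=> Exm; apply: conv2 => //; [exact: SE (hu m).1|exact: beta01].
elim: n => [|n [IH1 IH2]]; first by rewrite hx0; split => //; apply: Ey; rewrite hx0.
have Exn : E (x n.+1).
  rewrite hx; apply: conv2 => //; [exact: SE|exact: alpha01].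
by split => //; apply: Ey.
Qed.

Lemma ip_nonneg n p : C p -> 0 <= ip (p - u n) (u n - x n).
Proof.
move=> [Fp Pp].
have := (hu n).2 p Pp.1.
have := EP_le hA2 Pp (hu n).1.
have := hA2 (hu n).1 Pp.1.
have := Pp.2 _ (hu n).1.
move=> h1 h2 h3 h4.
have h5 : 0 <= (r n)^-1 * ip (p - u n) (u n - x n) by lra.
by move: h5; rewrite pmulr_rge0 // invr_gt0.
Qed.

Lemma u_dist n p : C p -> `|u n - p| ^+ 2 <= `|x n - p| ^+ 2 - `|u n - x n| ^+ 2.
Proof.
move=> Cp; have := ip_nonneg n Cp; rewrite (id1 hip (x n) (u n) p); lra.
Qed.

Lemma fejer n p : C p -> `|x n.+1 - p| ^+ 2 <= `|x n - p| ^+ 2 -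
  alpha n * beta n * (`|u n - x n| ^+ 2 + (1 - beta n) * `|x n - S (u n)| ^+ 2).
Proof.
move=> Cp.
have [Exn Eyn] := Exy n.
have q1' : `|S (yy n) - p| ^+ 2 <= `|yy n - p| ^+ 2.
  by rewrite ler_pXn2r ?nnegrE //; apply: (quasi_ne hyb Cp.1 Eyn).
have q2 : `|S (u n) - p| ^+ 2 <= `|u n - p| ^+ 2.
  by rewrite ler_pXn2r ?nnegrE //; apply: (quasi_ne hyb Cp.1 (hu n).1).
apply: (arith8 (alpha01 n) (beta01 n) _ q1' _ q2 (u_dist n Cp)).
- by rewrite hx (comb_dist2 hip).
- by rewrite /yy (comb_dist2 hip).
- exact: sqr_ge0.
Qed.

Lemma dist_step n p : C p -> `|x n.+1 - p| <= `|x n - p|.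
Proof.
move=> Cp; have h := fejer n Cp.
rewrite -(ler_pXn2r (n:=2)) ?nnegrE //; apply: le_trans h _.
rewrite lerBlDr lerDl; apply: mulr_ge0.
  by apply: mulr_ge0; [case/andP: (alpha01 n)|case/andP: (beta01 n)].
apply: addr_ge0; first exact: sqr_ge0.
apply: mulr_ge0; last exact: sqr_ge0.
by case/andP: (beta01 n) => _ h1; rewrite subr_ge0.
Qed.

Lemma dist_mono p n m : C p -> (n <= m)%N -> `|x m - p| <= `|x n - p|.
Proof. by move=> Cp; apply: (noninc_le (D := fun k => `|x k - p|)) => k; apply: dist_step. Qed.

Let p0 := xget 0 C.
Lemma Cp0 : C p0.
Proof. by apply: xgetPex; case: Cne => z [h1 h2]; exists z. Qed.

Let Mx := `|x0 - p0|.
Lemma x_bd n : `|x n - p0| <= Mx.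
Proof. by rewrite /Mx -hx0; apply: dist_mono Cp0 _. Qed.

Lemma u_bd n : `|u n - p0| <= Mx.
Proof.
have h := u_dist n Cp0.
have Mx0 : 0 <= Mx by exact: normr_ge0.
have h2 : `|x n - p0| ^+ 2 <= Mx ^+ 2 by rewrite ler_pXn2r ?nnegrE // x_bd.
have := arith12 h (sqr_ge0 `|u n - x n|) h2.
by rewrite ler_pXn2r ?nnegrE.
Qed.

Lemma u_norm_bd n : `|u n| <= Mx + `|p0|.
Proof.
have -> : u n = (u n - p0) + p0 by rewrite subrK.
by apply: le_trans (ler_normD _ _) _; rewrite lerD2r u_bd.
Qed.

Lemma gap_small (q : R) : 0 < q -> ev (fun n => `|x n - p0| ^+ 2 - `|x n.+1 - p0| ^+ 2 < q).
Proof.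
move=> q0.
have [N hN] := noninc_diff (D := fun k => `|x k - p0| ^+ 2) (fun k => sqr_ge0 _)
  (fun k => (ltac:(rewrite ler_pXn2r ?nnegrE //; exact: dist_step Cp0))) q0.
by exists N => n Nn; apply: hN.
Qed.

Lemma u_x_small e : 0 < e -> ev (fun n => `|u n - x n| < e).
Proof.
move=> e0.
have q0 : 0 < a * b * e ^+ 2.
  by case/andP: hb => hb0 _; apply: mulr_gt0; [exact: mulr_gt0|exact: exprn_gt0].
apply: (@ev_mono _ _ (gap_small q0)) => n hn.
apply: sqr_lt_pos => //.
have h := fejer n Cp0.
case/andP: (halpha n) => ha1 ha2; case/andP: (hbeta n) => hb1 hb2.
case/andP: hb => hb0 _.
exact: (arith9 a0 hb0 ha1 hb1 hb2 (sqr_ge0 `|u n - x n|) (sqr_ge0 `|x n - S (u n)|) h hn).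
Qed.

Lemma x_Su_small e : 0 < e -> ev (fun n => `|x n - S (u n)| < e).
Proof.
move=> e0.
have [c [c0 [N hN]]] := liminf_pos hbinf.
have q0 : 0 < a * c * e ^+ 2.
  by apply: mulr_gt0; [exact: mulr_gt0|exact: exprn_gt0].
have evc : ev (fun n => c <= beta n * (1 - beta n)) by exists N.
apply: (@ev_mono _ _ (evI (gap_small q0) evc)) => n [hn hc].
apply: sqr_lt_pos => //.
have h := fejer n Cp0.
case/andP: (halpha n) => ha1 ha2; case/andP: (beta01 n) => hb1 hb2.
exact: (arith10 a0 c0 ha1 hb1 hb2 hc (sqr_ge0 `|u n - x n|) (sqr_ge0 `|x n - S (u n)|) h hn).
Qed.

Lemma u_Su_small e : 0 < e -> ev (fun n => `|S (u n) - u n| < e).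
Proof.
move=> e0; have e20 : 0 < e / 2 by rewrite divr_gt0.
apply: (@ev_mono _ _ (evI (u_x_small e20) (x_Su_small e20))) => n [h1 h2].
have -> : S (u n) - u n = - (x n - S (u n)) + (x n - u n).
  by rewrite opprB addrA subrK.
apply: le_lt_trans (ler_normD _ _) _; rewrite normrN (distrC (x n) (u n)).
exact: arith11 h1 h2.
Qed.

Lemma Ccl : closed C.
Proof. exact: (C_closed Ec Ecv hA1 hA2 hA3 hA4 hyb). Qed.
Lemma Ccv : convex_subset C.
Proof. exact: (C_convex hip Ecv hA1 hA2 hA3 hA4 hyb). Qed.
Lemma Cex : exists k, C k.
Proof. by case: Cne => z [h1 h2]; exists z. Qed.

Let q n := metric_proj C (x n).

Lemma qP n : C (q n) /\ forall k, C k -> `|x n - q n| <= `|x n - k|.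
Proof. exact: (metric_projP hip (x n) Ccl Ccv Cex). Qed.

Lemma qchar n c : C c -> ip (x n - q n) (c - q n) <= 0.
Proof. by move=> Cc; apply: (proj_char hip Ccv (qP n).1 (qP n).2). Qed.

Lemma g_step n : `|x n.+1 - q n.+1| <= `|x n - q n|.
Proof.
apply: le_trans ((qP n.+1).2 _ (qP n).1) _.
exact: dist_step (qP n).1.
Qed.

Lemma q_dist n m : (n <= m)%N ->
  `|q n - q m| ^+ 2 <= `|x n - q n| ^+ 2 - `|x m - q m| ^+ 2.
Proof.
move=> nm.
have h1 := id2 hip (x m) (q m) (q n).
have h2 := qchar m (qP n).1.
have h3 : `|x m - q n| ^+ 2 <= `|x n - q n| ^+ 2.
  by rewrite ler_pXn2r ?nnegrE //; apply: dist_mono (qP n).1 nm.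
rewrite (distrC (q n)).
exact: arith13 h1 h2 h3.
Qed.

Lemma q_cvg : exists w : H, q @ \oo --> w.
Proof.
apply: cauchy_seq_cvg => e e0.
have e20 : 0 < e ^+ 2 by exact: exprn_gt0.
have [N hN] := noninc_diff (D := fun k => `|x k - q k| ^+ 2) (fun k => sqr_ge0 _)
  (fun k => (ltac:(rewrite ler_pXn2r ?nnegrE //; exact: g_step))) e20.
exists N => n Nn; apply: sqr_lt_pos => //.
exact: le_lt_trans (q_dist Nn) (hN _ _ (leqnn N) Nn).
Qed.

Let G := `|x 0%N - q 0%N|.
Lemma g_bd n : `|x n - q n| <= G.
Proof. exact: (noninc_le (D := fun k => `|x k - q k|) g_step (leq0n n)). Qed.

Let Mu := Mx + `|p0|.

Lemma tail_ev (Q : nat -> Prop) (D : set H) : ev (fun n => D (u n)) ->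
  exists m, forall n, (m <= n)%N -> Q n -> D (u n).
Proof. by case=> N hN; exists N => n /hN. Qed.

Lemma claim (w : H) (hw : q @ \oo --> w) (hh : H) (c : R) : 0 < c ->
  (forall m, exists n, (m <= n)%N /\ c <= ip (x n - w) hh) -> False.
Proof.
move=> c0 Qinf.
have [z hz] := cluster_pt hip (Q := fun n => c <= ip (x n - w) hh) u_norm_bd Qinf.
have Ez : E z.
  by apply: hz Ec Ecv _; exists 0%N => n _ _; exact: (hu n).1.
have Szz : S z = z.
  set d := z - S z.
  suff : `|d| ^+ 2 <= 0.
    rewrite -[0](expr0n _ 2) ler_pXn2r ?nnegrE // normr_le0 subr_eq0 => /eqP.
    by move=> <-.
  apply: le0_small => eps eps0.
  set K := 4 * Mu + `|z| + 3 * `|S z|.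
  have Mu0 : 0 <= Mu by rewrite /Mu /Mx; apply: addr_ge0.
  have K0 : 0 <= K by rewrite /K; apply: arithK.
  have ek : 0 < eps / (K + 1) by apply: divr_gt0 => //; lra.
  have Dz := hz [set y | ip (y - z) d <= (eps - `|d| ^+ 2) / 2]
     (@halfspace_closed _ _ _ hip z d _) (@halfspace_convex _ _ _ hip z d _).
  have : ip (z - z) d <= (eps - `|d| ^+ 2) / 2.
    apply: Dz; apply: tail_ev; apply: (@ev_mono _ _ (u_Su_small ek)) => n hn /=.
    have Eun := (hu n).1.
    have h1 := demi_ineq hip (hyb Eun Ez).
    have h2 := demi_bound hip (u n) z (S (u n)) (S z).
    have h3 : `|u n - z| + 3 * `|u n - S z| <= K.
      have b1 : `|u n - z| <= Mu + `|z| by apply: le_trans (ler_normB _ _) _; rewrite lerD2r u_norm_bd.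
      have b2 : `|u n - S z| <= Mu + `|S z| by apply: le_trans (ler_normB _ _) _; rewrite lerD2r u_norm_bd.
      rewrite /K; lra.
    have hn' := lt_divP (ltac:(lra) : 0 < K + 1) hn.
    exact: arith14 h1 h2 h3 hn' (normr_ge0 _) (addr_ge0 (normr_ge0 _) (mulr_ge0 (ler0n _ 3) (normr_ge0 _))).
  by rewrite subrr (ip0l hip); lra.
have EPz : EPset E f z.
  apply: (minty Ecv hA1 hA3 hA4 Ez) => y Ey.
  apply: le_small => eps eps0.
  have [rho [rho0 [Nr hNr]]] := liminf_pos hrinf.
  set B := `|y| + Mu.
  have B0 : 0 <= B by rewrite /B /Mu /Mx; apply: addr_ge0 => //; apply: addr_ge0.
  have ek : 0 < eps * rho / (B + 1) by apply: divr_gt0; [apply: mulr_gt0|lra].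
  have Dz := hz [set t | E t /\ f y t <= eps]
     (@sublevel_closed _ _ _ _ Ec hA4 y eps Ey) (@sublevel_convex _ _ _ _ Ecv hA4 y eps Ey).
  have : E z /\ f y z <= eps.
    apply: Dz; apply: tail_ev.
    have evr : ev (fun n => rho <= r n) by exists Nr.
    apply: (@ev_mono _ _ (evI evr (u_x_small ek))) => n [hrn hn] /=.
    have Eun := (hu n).1.
    split => //.
    have h1 := (hu n).2 y Ey.
    have h2 := hA2 Eun Ey.
    have h3 := CS hip (y - u n) (u n - x n).
    have h4 : `|y - u n| <= B by apply: le_trans (ler_normB _ _) _; rewrite lerD2l u_norm_bd.
    have hn' := lt_divP (ltac:(lra) : 0 < B + 1) hn.
    have hri : (r n)^-1 * rho <= 1 by rewrite mulrC ler_pdivrMr // mul1r.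
    have ri0 : 0 < (r n)^-1 by rewrite invr_gt0.
    exact: arith15 ri0 hri h1 h2 h3 h4 (normr_ge0 _) (normr_ge0 _) hn' rho0 eps0.
  by case.
have Cz : C z by split.
have Cw : C w.
  apply: (closed_cvg _ Ccl _ _ hw); apply/near_oo; exists 0%N => n _; exact: (qP n).1.
have zw : z = w.
  suff : `|z - w| ^+ 2 <= 0.
    rewrite -[0](expr0n _ 2) ler_pXn2r ?nnegrE // normr_le0 subr_eq0 => /eqP.
    by [].
  apply: le0_small => eps eps0.
  set Z := `|z - w|.
  have Z0 : 0 <= Z := normr_ge0 _.
  have G0 : 0 <= G := normr_ge0 _.
  have ek1 : 0 < eps / 3 / (Z + 1) by apply: divr_gt0; lra.
  have ek2 : 0 < eps / 3 / (G + Z + 1) by apply: divr_gt0; lra.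
  have Dz := hz [set y | ip (y - w) (z - w) <= eps]
     (@halfspace_closed _ _ _ hip w (z - w) _) (@halfspace_convex _ _ _ hip w (z - w) _).
  have : ip (z - w) (z - w) <= eps.
    apply: Dz; apply: tail_ev.
    have evq : ev (fun n => `|w - q n| < eps / 3 / (G + Z + 1)).
      have [N hN] := (cvg_distP q w).1 hw _ ek2; by exists N.
    apply: (@ev_mono _ _ (evI evq (u_x_small ek1))) => n [hq hn] /=.
    rewrite (id3 hip (u n) (x n) (q n) w z).
    have h1 := CS hip (u n - x n) (z - w).
    have h2 := qchar n Cz.
    have h3 := CS hip (x n - q n) (q n - w).
    have h4 := CS hip (q n - w) (z - w).
    have h5 := g_bd n.
    rewrite (distrC (q n) w) in h3 h4.
    have hq' := lt_divP (ltac:(lra) : 0 < G + Z + 1) hq.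
    have hn' := lt_divP (ltac:(lra) : 0 < Z + 1) hn.
    exact: arith16 h1 h2 h3 h4 h5 hq' hn' (normr_ge0 _) (normr_ge0 _) (normr_ge0 _) (normr_ge0 _).
  by rewrite (ipxx hip).
have hh0 : 0 <= `|hh| := normr_ge0 hh.
have ek : 0 < c / 2 / (`|hh| + 1) by apply: divr_gt0; lra.
have Dz := hz [set y | ip (y - w) (- hh) <= - (c / 2)]
     (@halfspace_closed _ _ _ hip w (- hh) _) (@halfspace_convex _ _ _ hip w (- hh) _).
have : ip (z - w) (- hh) <= - (c / 2).
  apply: Dz.
  have [N hN] := u_x_small ek.
  exists N => n Nn Qn /=.
  have hn := hN n Nn.
  have -> : ip (u n - w) (- hh) = - ip (x n - w) hh - ip (u n - x n) hh.
    by ipexp hip; ring.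
  have h1 := CSabs hip (u n - x n) hh.
  rewrite ler_norml in h1; case/andP: h1 => h1 _.
  have hn' := lt_divP (ltac:(lra) : 0 < `|hh| + 1) hn.
  exact: arith17 Qn h1 hn' (normr_ge0 _) (normr_ge0 _).
rewrite zw subrr (ip0l hip); lra.
Qed.

Lemma main : exists v, Fixpts E S v /\ EPset E f v /\ weak_cvg ip x v /\
    (fun n => metric_proj (Fixpts E S `&` EPset E f) (x n)) @ \oo --> v.
Proof.
have [w hw] := q_cvg.
have Cw : C w.
  apply: (closed_cvg _ Ccl _ _ hw); apply/near_oo; exists 0%N => n _; exact: (qP n).1.
exists w; split; first exact: Cw.1.
split; first exact: Cw.2.
split; last exact: hw.
move=> h; apply/cvg_distP => e e0.
case: (pselect (exists N, forall n, (N <= n)%N -> `|ip w h - ip (x n) h| < e)) => // hne.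
exfalso.
have inf : forall m, exists n, (m <= n)%N /\ e <= `|ip w h - ip (x n) h|.
  move=> m; case: (pselect (exists n, (m <= n)%N /\ e <= `|ip w h - ip (x n) h|)) => // hno.
  exfalso; apply: hne; exists m => n mn; rewrite ltNge; apply/negP => he.
  by apply: hno; exists n.
case: (pselect (forall m, exists n, (m <= n)%N /\ e <= ip (x n - w) h)) => [h1|h1].
  exact: (claim (w:=w) hw (hh:=h) (c:=e) e0 h1).
have [m1 hm1] : exists m1, forall n, (m1 <= n)%N -> ~ (e <= ip (x n - w) h).
  case: (pselect (exists m1, forall n, (m1 <= n)%N -> ~ (e <= ip (x n - w) h))) => // hno.
  exfalso; apply: h1 => m.
  case: (pselect (exists n, (m <= n)%N /\ e <= ip (x n - w) h)) => // hno2.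
  exfalso; apply: hno; exists m => n mn hen; apply: hno2; by exists n.
apply: (claim hw (hh := - h) e0) => m.
have [n [mn hn]] := inf (maxn m m1).
exists n; split; first exact: leq_trans (leq_maxl _ _) mn.
have hn1 := hm1 n (leq_trans (leq_maxr _ _) mn).
rewrite (ipNr hip) (ipBl hip); rewrite (ipBl hip) in hn1.
move: hn; rewrite ler_normr => /orP [hn|hn]; first lra.
exfalso; apply: hn1; lra.
Qed.

End Main.

Unset Implicit Arguments.

Theorem theorem3p4 (R : realType) (H : completeNormedModType R)
  (ip : H -> H -> R) (E : set H) (f : H -> H -> R) (S : H -> H)
  (alpha r beta : nat -> R) (a b : R) (x0 : H) (x u : nat -> H) :
  is_inner_product ip ->
  (exists z, E z) -> closed E -> convex_subset E ->
  A1 E f -> A2 E f -> A3 E f -> A4 E f ->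
  (forall z, E z -> E (S z)) -> hybrid E S ->
  (exists z, Fixpts E S z /\ EPset E f z) ->
  0 < a -> (forall n, a <= alpha n <= 1) ->
  (forall n, 0 < r n) -> (0 < limn_einf (fun n => (r n)%:E))%E ->
  0 < b < 1 -> (forall n, b <= beta n <= 1) ->
  (0 < limn_einf (fun n => (beta n * (1 - beta n))%:E))%E ->
  E x0 -> x 0%N = x0 ->
  (forall n, E (u n) /\
     forall y, E y -> 0 <= f (u n) y + (r n)^-1 * ip (y - u n) (u n - x n)) ->
  (forall n, x n.+1 = (1 - alpha n) *: x n +
     alpha n *: S ((1 - beta n) *: x n + beta n *: S (u n))) ->
  exists v, Fixpts E S v /\ EPset E f v /\ weak_cvg ip x v /\
    (fun n => metric_proj (Fixpts E S `&` EPset E f) (x n)) @ \oo --> v.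
Proof.
move=> hip Ene Ec Ecv hA1 hA2 hA3 hA4 SE hyb Cne a0 halpha hr hrinf hb hbeta hbinf Ex0 hx0 hu hx.
by eapply main; eassumption.
Qed.
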